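(* Let $0<\varepsilon<1/4$ and $r=(10/\varepsilon^2)\log(1/\varepsilon)$. Let $G$ be a bipartite graph with at least one edge, and let $H$ be a balanced bipartite subgraph of $G$ with parts $A,B$, $|A|=|B|=m$, that maximizes $\Phi(F)=d_F^{\,r}\,v(F)$ over all balanced bipartite subgraphs $F$ of $G$. Assume $\varepsilon m$ is a positive integer. Then for all $A_1\subseteq A$, $B_1\subseteq B$ with $|A_1|=|B_1|=\varepsilon m$ we have $$d(A_1,B_1)\le d_H\,(1+\varepsilon^2/5).$$
   Context: $\log$ is the natural logarithm; $v(F)$ is the number of vertices of $F$. A bipartite graph is balanced if its two parts have equal size. For disjoint vertex sets $X,Y$, $d(X,Y)=e(X,Y)/(|X|\,|Y|)$ (number of edges between $X$ and $Y$ divided by $|X||Y|$); the density $d_F$ of a bipartite graph $F$ is this quantity for its two parts. *)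

(* Defs.v *)
From HB Require Import structures.
From mathcomp Require Import all_boot all_order all_algebra.
From mathcomp Require Import reals exp.
Set Implicit Arguments. Unset Strict Implicit. Unset Printing Implicit Defensive.
Import Order.TTheory GRing.Theory Num.Theory.
Local Open Scope ring_scope.

Section Defs.
Variable T : finType.

Definition is_graph (e : rel T) := symmetric e /\ irreflexive e.

Definition bipartite_graph (e : rel T) :=
  exists P : {set T}, forall x y, e x y -> (x \in P) != (y \in P).

Definition ecount (e : rel T) (X Y : {set T}) : nat :=
  #|[set p : T * T | [&& p.1 \in X, p.2 \in Y & e p.1 p.2]]|.

Definition dens {R : realType} (e : rel T) (X Y : {set T}) : R :=
  (ecount e X Y)%:R / (#|X| * #|Y|)%:R.

Definition is_bal_bip_subgraph (eG : rel T) (X Y : {set T}) (eF : rel T) :=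
  [/\ [disjoint X & Y], #|X| = #|Y|, (0 < #|X|)%N,
      symmetric eF /\ subrel eF eG &
      forall x y, eF x y -> (x \in X /\ y \in Y) \/ (x \in Y /\ y \in X)].

Definition Phi {R : realType} (r : R) (eF : rel T) (X Y : {set T}) : R :=
  powR (dens eF X Y) r * (#|X| + #|Y|)%:R.
End Defs.

Definition rpar {R : realType} (eps : R) : R := 10 / eps ^+ 2 * ln (1 / eps).

(* Main.v *)
Require Import Defs.
From HB Require Import structures.
From mathcomp Require Import all_boot all_order all_algebra.
From mathcomp Require Import reals exp.
From mathcomp Require Import sequences.
From mathcomp Require Import ring lra.
Import Order.TTheory GRing.Theory Num.Theory.
Local Open Scope ring_scope.

Lemma num_part {R : realType} (eps D D1 M : R) :
  0 < eps -> eps < 1 / 4 -> 0 < M -> 0 <= D -> 0 <= D1 ->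
  powR D1 (rpar eps) * (eps * M + eps * M) <= powR D (rpar eps) * (M + M) ->
  D1 <= D * (1 + eps ^+ 2 / 5).
Proof.
move=> e0 e4 M0 D0 D10 h.
set r := rpar eps in h.
have P0 := powR_ge0 D (rpar eps).
have h1 : powR D1 r * eps <= powR D r by nra.
have [->|D1p] := eqVneq D1 0.
  by apply: mulr_ge0 => //; rewrite addr_ge0 // divr_ge0 // sqr_ge0.
have D1g : 0 < D1 by rewrite lt_def D1p.
have P1 : 0 < powR D1 r by apply: powR_gt0.
have Dp : D != 0.
  apply/eqP => D00; move: h1; rewrite D00 powR0; first nra.
  rewrite /r /rpar; apply/eqP=> r0.
  have : 0 < 10 / eps ^+ 2 * ln (1 / eps).
    apply: mulr_gt0; first by rewrite divr_gt0 // exprn_gt0.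
    apply: ln_gt0; rewrite ltr_pdivlMr //; lra.
  by rewrite r0 ltxx.
have Dg : 0 < D by rewrite lt_def Dp.
have L0 : 0 < ln (1 / eps) by apply: ln_gt0; rewrite ltr_pdivlMr //; lra.
have lneps : ln eps = - ln (1 / eps).
  by rewrite div1r lnV ?opprK // posrE.
have h2 : r * ln D1 + ln eps <= r * ln D.
  have := h1; rewrite /powR (negPf D1p) (negPf Dp).
  rewrite -(@ler_ln R); last 2 first.
  - by rewrite posrE mulr_gt0 // expR_gt0.
  - by rewrite posrE expR_gt0.
  by rewrite lnM ?posrE ?expR_gt0 // !expRK.
set d := ln D1 - ln D.
have h3 : r * d <= ln (1 / eps) by rewrite /d; lra.
have e2 : 0 < eps ^+ 2 by rewrite exprn_gt0.
have hd : d <= eps ^+ 2 / 10.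
  move: h3; rewrite /r /rpar.
  set L := ln (1 / eps) => h3.
  have h4 : 10 / eps ^+ 2 * d <= 1.
    by rewrite -(ler_pM2r L0) (mul1r L) mulrAC.
  move: h4; rewrite mulrC -ler_pdivlMr; last by rewrite divr_gt0.
  by rewrite invf_div mul1r.
set y := eps ^+ 2 / 5.
have y0 : 0 < y by rewrite divr_gt0.
have y1 : y <= 1.
  rewrite /y ler_pdivrMr // mul1r.
  rewrite expr2; nra.
have hd' : d <= y / 2 by rewrite /y; lra.
have ea : expR (y / 2) <= 1 + y.
  have hb := expR_ge1Dx (- (y / 2)).
  have hab := expRxMexpNx_1 (y / 2).
  have ha := expR_gt0 (y / 2).
  nra.
have : D1 <= D * expR (y / 2).
  rewrite -{1}(lnK (x:=D1)) ?posrE // -{1}(lnK (x:=D)) ?posrE //.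
  rewrite -expRD ler_expR; rewrite /d in hd'; lra.
move=> h5; apply: (le_trans h5); rewrite ler_pM2l //.
Qed.

Theorem lemma3p3 (R : realType) (eps : R) (T : finType) (eG : rel T)
    (A B : {set T}) (eH : rel T) (m k : nat) :
  0 < eps -> eps < 1 / 4 ->
  is_graph eG -> bipartite_graph eG -> (exists x y, eG x y) ->
  is_bal_bip_subgraph eG A B eH -> #|A| = m ->
  (forall (X Y : {set T}) (eF : rel T), is_bal_bip_subgraph eG X Y eF ->
      Phi (rpar eps) eF X Y <= Phi (rpar eps) eH A B) ->
  (0 < k)%N -> k%:R = eps * m%:R ->
  forall A1 B1 : {set T}, A1 \subset A -> B1 \subset B ->
    #|A1| = k -> #|B1| = k ->
    dens eH A1 B1 <= dens eH A B * (1 + eps ^+ 2 / 5).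
Proof.
move=> e0 e4 _ _ _ hH hA hmax k0 hk A1 B1 sA sB hA1 hB1.
case: hH => dAB cAB _ [symH subH] _.
pose eF := [rel x y | eH x y && (((x \in A1) && (y \in B1)) || ((x \in B1) && (y \in A1)))].
have hF : is_bal_bip_subgraph eG A1 B1 eF.
  split.
  - exact: disjointW sA sB dAB.
  - by rewrite hA1 hB1.
  - by rewrite hA1.
  - split.
      move=> x y /=; rewrite [eH x y]symH.
      by case: (x \in A1); case: (y \in B1); case: (x \in B1); case: (y \in A1); rewrite ?andbT ?andbF ?orbF ?orbT.
    by move=> x y /andP[/subH].
  - by move=> x y /andP[_ /orP[/andP[? ?]|/andP[? ?]]]; [left|right].
have edF : dens eF A1 B1 = dens eH A1 B1 :> R.
  rewrite /dens /ecount; congr (_%:R / _); apply: eq_card => -[x y].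
  rewrite !inE /=.
  by case: (x \in A1); case: (y \in B1); rewrite /= ?andbT ?andbF.
have := hmax _ _ _ hF; rewrite /Phi edF hA1 hB1 -cAB hA !natrD hk.
have M0 : 0 < (m%:R : R).
  rewrite ltr0n lt0n; apply/eqP => m0; move: hk; rewrite m0 mulr0.
  move/eqP; rewrite pnatr_eq0 => /eqP k00; by move: k0; rewrite k00.
move=> h; apply: (@num_part R eps _ _ _ e0 e4 M0 _ _ h); by apply: divr_ge0.
Qed.
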